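(* Let $n\ge 3$ and $m\ge 2n$. Then the set \[D=\{(i,2i-1),(i,2i): i\in[n-1]\}\cup\{(n,j): 2n-1\le j\le m-1\}\] is an identifying code of $K_n\times K_m$.
   Context: $K_n\times K_m$ is the direct product of complete graphs: vertex set $[n]\times[m]$, with $(i,r)$ adjacent to $(j,s)$ iff $i\ne j$ and $r \ne s$. An identifying code is a dominating set $C$ with $N[x]\cap C\ne N[y]\cap C$ for all distinct vertices $x,y$ ($N[x]$ the closed neighborhood). *)

(* Defs.v *)
From mathcomp Require Import all_boot.
Set Implicit Arguments. Unset Strict Implicit. Unset Printing Implicit Defensive.

(* Direct product K_n x K_m on vertex set 'I_n * 'I_m.
   A vertex (i, r) with i : 'I_n, r : 'I_m stands for the paper's
   vertex (i+1, r+1) in [n] x [m]. *)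
Definition kprod_adj (n m : nat) : rel ('I_n * 'I_m) :=
  fun x y => (x.1 != y.1) && (x.2 != y.2).

Definition closed_nbhd (n m : nat) (x : 'I_n * 'I_m) : {set 'I_n * 'I_m} :=
  [set y | (y == x) || kprod_adj x y].

Definition is_identifying_code (n m : nat) (C : {set 'I_n * 'I_m}) : Prop :=
  (forall x, closed_nbhd x :&: C != set0) /\
  (forall x y, x != y -> closed_nbhd x :&: C != closed_nbhd y :&: C).

(* The set D of the paper, written with 1-based labels a = i+1, b = r+1:
   D = {(a,2a-1),(a,2a) : a in [n-1]} U {(n,b) : 2n-1 <= b <= m-1}. *)
Definition codeD (n m : nat) : {set 'I_n * 'I_m} :=
  [set v : 'I_n * 'I_m | let a := (nat_of_ord v.1).+1 in let b := (nat_of_ord v.2).+1 in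
           ((1 <= a <= n - 1) && ((b == 2 * a - 1) || (b == 2 * a)))
           || ((a == n) && (2 * n - 1 <= b <= m - 1))].

(* Main.v *)
Require Import Defs.
From mathcomp Require Import all_boot zify.

Lemma nbhd_mem n m (x v : 'I_n * 'I_m) :
  (v \in closed_nbhd x) = ((val v.2 == val x.2) == (val v.1 == val x.1)).
Proof.
case: x v => [i r] [k c]; rewrite inE /kprod_adj /= xpair_eqE /= !val_eqE.
by rewrite (eq_sym i) (eq_sym r); case: (k == i); case: (c == r).
Qed.

Lemma memD1 n m (hn : 3 <= n) (hm : 2 * n <= m) k c (hk : k < n) (hc : c < m)
  (h : (c == 2*k) || ((c == 2*k+1) && (k < n-1))) :
  (Ordinal hk, Ordinal hc) \in codeD n m.
Proof. rewrite inE /=. lia. Qed.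

Lemma memD2 n m (hn : 3 <= n) (hm : 2 * n <= m) k c (hk : k < n) (hc : c < m)
  (h1 : c < m - 1) (h2 : k = minn (c %/ 2) (n-1)) :
  (Ordinal hk, Ordinal hc) \in codeD n m.
Proof. rewrite inE /=. lia. Qed.

Theorem mainTheorem14 (n m : nat) (hn : 3 <= n) (hm : 2 * n <= m) :
  is_identifying_code (codeD n m).
Proof.
split.
- move=> [i r].
  have [k [hk hki hkr]] : exists k, [/\ k < n, k != val i & 2*k != val r].
    have [/andP[h1 h2]|h] := boolP ((val i != 0) && (val r != 0)).
      by exists 0; split => //; lia.
    have [/andP[h1 h2]|h'] := boolP ((val i != 1) && (val r != 2)).
      by exists 1; split => //; lia.
    by exists 2; split; lia.
  have hc : 2 * k < m by lia.
  have vD := @memD1 n m hn hm k (2*k) hk hc (introT orP (or_introl (eqxx _))).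
  apply/set0Pn; exists (Ordinal hk, Ordinal hc).
  by rewrite in_setI vD nbhd_mem /= (negbTE hki) (negbTE hkr).
- move=> [i r] [j s] hxy; apply/negP => /eqP E.
  have H : forall v, v \in codeD n m ->
     ((val v.2 == val r) == (val v.1 == val i)) = ((val v.2 == val s) == (val v.1 == val j)).
    move=> v vD; have := erefl (v \in closed_nbhd (i, r) :&: codeD n m).
    by rewrite {2}E !in_setI !nbhd_mem vD !andbT.
  have [hij|hij] := eqVneq (val i) (val j).
  + have hrs : val r != val s.
      apply: contra hxy => /eqP hrs; rewrite xpair_eqE -!val_eqE hij hrs.
      by rewrite !eqxx.
    have [c [hc1 hc2]] : exists c, c < m - 1 /\ (c == val r) != (c == val s).
      have [hr|hr] := ltnP (val r) (m-1).
        by exists (val r); rewrite eqxx (negbTE hrs).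
      exists (val s); rewrite eqxx (eq_sym (val s)) (negbTE hrs); split => //.
      have hs1 : val s < m := ltn_ord s; have hr1 : val r < m := ltn_ord r; lia.
    have hk : minn (c %/ 2) (n-1) < n by lia.
    have hc : c < m by lia.
    have := H _ (@memD2 n m hn hm _ c hk hc hc1 erefl).
    rewrite /= -hij; move: hc2.
    by case: (c == val r); case: (c == val s); case: (_ == val i).
  + have [hrs|hrs] := eqVneq (val r) (val s).
      have hk : val i < n := ltn_ord i.
      have hc : 2 * val i < m by lia.
      have := H _ (@memD1 n m hn hm _ (2 * val i) hk hc (introT orP (or_introl (eqxx _)))).
      rewrite /= -hrs eqxx (negbTE hij).
      by case: (_ == val r).
    have [k [c [hk hc hkij /andP[hcr hcs] hD]]] : exists k c, [/\ k < n, c < m,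
        (k == val i) || (k == val j), (c != val r) && (c != val s) &
        (c == 2*k) || ((c == 2*k+1) && (k < n-1))].
      have hi : val i < n := ltn_ord i; have hj : val j < n := ltn_ord j; have hr0 : val r < m := ltn_ord r; have hs0 : val s < m := ltn_ord s.
      have [hin|hin] := ltnP (val i) (n-1).
        have [h1|h1] := boolP ((2 * val i != val r) && (2 * val i != val s)).
          by exists (val i), (2 * val i); split; lia.
        have [h2|h2] := boolP ((2 * val i + 1 != val r) && (2 * val i + 1 != val s)).
          by exists (val i), (2 * val i + 1); split; lia.
        by exists (val j), (2 * val j); split; lia.
      have hjn : val j < n - 1 by lia.
      have [h1|h1] := boolP ((2 * val j != val r) && (2 * val j != val s)).
        by exists (val j), (2 * val j); split; lia.
      have [h2|h2] := boolP ((2 * val j + 1 != val r) && (2 * val j + 1 != val s)).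
        by exists (val j), (2 * val j + 1); split; lia.
      by exists (val i), (2 * val i); split; lia.
    have := H _ (@memD1 n m hn hm _ _ hk hc hD).
    rewrite /= (negbTE hcr) (negbTE hcs).
    move: hkij hij; case: (eqVneq k (val i)) => [->|_] /=.
      by move=> _ /negbTE ->.
    by move=> ->.
Qed.
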